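(* Let $A\in\mathbb{R}^{n\times n}$, $B\in\mathbb{R}^{n\times m}$ with $(A,B)$ stabilizable, $Q\succ0$, $R\succ0$, $\alpha>1$, $\gamma,\eta\ge0$, $x_k\in\mathbb{R}^n$, and let $\tilde P$, $V$, $J_k$, $Z$, $H_0,H_1,H_2$ be as in the context. The optimization problem (P1): minimize over $F_k\in\mathbb{R}^{m\times n}$, $\delta_k$ the objective $-\delta_k+\gamma\|F_k\|_0+\eta\|F_kx_k\|_0$ subject to $J_k(F_k,\xi;x_k)\le\alpha\big(V(x_k)-V(x(t_k+\xi))\big)$ for all $\xi\in[0,\delta_k]$, is equivalent to the problem (P2): minimize over $f_k\in\mathbb{R}^{mn}$, $\delta_k$ the objective $-\delta_k+\gamma\|f_k\|_0+\eta\|(x_k^T\otimes I)f_k\|_0$ subject to, for all $\xi\in[0,\delta_k)$, $$\tfrac12 f_k^TP_1(\xi)f_k+q_1(\xi)^Tf_k+r_1(\xi)\le0,$$ where $f_k:=\mathrm{vec}(F_k)$ and $$P_1(\xi):=2(x_kx_k^T)\otimes\big(H_2(\xi)+\alpha B^TZ(\xi)^Te^{A^T\xi}\tilde Pe^{A\xi}Z(\xi)B\big),$$ $$q_1(\xi):=2\,\mathrm{vec}\Big(\big(H_1(\xi)^T+\alpha B^TZ(\xi)^Te^{A^T\xi}\tilde Pe^{A\xi}\big)x_kx_k^T\Big),$$ $$r_1(\xi):=x_k^T\big(H_0(\xi)+\alpha(e^{A^T\xi}\tilde Pe^{A\xi}-\tilde P)\big)x_k.$$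
   Context: $\tilde F$ is a fixed gain with $A+B\tilde F$ Hurwitz and $\tilde P\succ0$ solves $(A+B\tilde F)^T\tilde P+\tilde P(A+B\tilde F)+Q+\tilde F^TR\tilde F=0$; $V(x):=x^T\tilde Px$. For $\xi\ge0$, $x(t_k+\xi)$ is the solution of $\dot x=Ax+Bu$ from $x(t_k)=x_k$ with constant input $u=F_kx_k$, and $J_k(F_k,\xi;x_k):=\int_{t_k}^{t_k+\xi}(x^TQx+u^TRu)\,dt$. $Z(\tau):=\int_0^\tau e^{-As}ds$, $H_0(\xi):=\int_0^\xi e^{A^T\tau}Qe^{A\tau}d\tau$, $H_1(\xi):=\int_0^\xi e^{A^T\tau}Qe^{A\tau}Z(\tau)Bd\tau$, $H_2(\xi):=\int_0^\xi(e^{A\tau}Z(\tau)B)^TQ(e^{A\tau}Z(\tau)B)d\tau+\xi R$. $\|\cdot\|_0$ is the number of nonzero entries, $\mathrm{vec}$ stacks columns, $\otimes$ is the Kronecker product, and $I$ is the $m\times m$ identity. *)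

(* Defs.v *)
From HB Require Import structures.
From mathcomp Require Import all_boot all_order all_algebra.
From mathcomp Require Import all_classical all_reals all_analysis.
From mathcomp Require Import complex mxtens.

Set Implicit Arguments.
Unset Strict Implicit.
Unset Printing Implicit Defensive.

Import Order.TTheory GRing.Theory Num.Theory.
Import numFieldNormedType.Exports.
Local Open Scope ring_scope.
Local Open Scope complex_scope.
Local Open Scope classical_set_scope.

Section Defs.
Variable R : realType.

Definition quad n (M : 'M[R]_n) (x : 'cV[R]_n) : R := (x^T *m M *m x) 0 0.

Definition posdef n (M : 'M[R]_n) : Prop :=
  M^T = M /\ forall x : 'cV[R]_n, x != 0 -> 0 < quad M x.

Definition hurwitz n (M : 'M[R]_n) : Prop :=
  forall lam : R[i], eigenvalue (map_mx (fun r : R => (r%:C)%C) M) lam ->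
    Re lam < 0.

Definition stabilizable n m (A : 'M[R]_n) (B : 'M[R]_(n, m)) : Prop :=
  exists F : 'M[R]_(m, n), hurwitz (A + B *m F).

Definition expm n (t : R) (M : 'M[R]_n) : 'M[R]_n :=
  \matrix_(i, j) limn (fun N : nat =>
     (\sum_(k < N) ((t ^+ k / (k`!)%:R) *: M ^+ k)) i j).

Definition mxint p q (xi : R) (f : R -> 'M[R]_(p, q)) : 'M[R]_(p, q) :=
  \matrix_(i, j) Rintegral (@lebesgue_measure R) `[0, xi] (fun t => f t i j).

Variables (n m : nat) (A : 'M[R]_n) (B : 'M[R]_(n, m)) (Q : 'M[R]_n)
  (Rc : 'M[R]_m).

Definition Zm (tau : R) : 'M[R]_n := mxint tau (fun s => expm (- s) A).

Definition H0 (xi : R) : 'M[R]_n :=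
  mxint xi (fun tau => (expm tau A)^T *m Q *m expm tau A).

Definition H1 (xi : R) : 'M[R]_(n, m) :=
  mxint xi (fun tau => (expm tau A)^T *m Q *m expm tau A *m Zm tau *m B).

Definition H2 (xi : R) : 'M[R]_m :=
  mxint xi (fun tau => (expm tau A *m Zm tau *m B)^T *m Q
                        *m (expm tau A *m Zm tau *m B)) + xi *: Rc.

End Defs.

Definition nnz (R : realType) p q (M : 'M[R]_(p, q)) : nat :=
  #|[set ij : 'I_p * 'I_q | M ij.1 ij.2 != 0]|.

(* vec: stacks the columns; entry of index j*m + i is F i j *)
Definition vec (R : realType) m n (F : 'M[R]_(m, n)) : 'cV[R]_(n * m) :=
  \col_k F (mxtens_unindex k).2 (mxtens_unindex k).1.

(* Main.v *)
Require Import Defs.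
From HB Require Import structures.
From mathcomp Require Import all_boot all_order all_algebra.
From mathcomp Require Import all_classical all_reals all_analysis.
From mathcomp Require Import complex mxtens.
From mathcomp Require Import ring lra.
Import Order.TTheory GRing.Theory Num.Theory.
Import numFieldNormedType.Exports.
Local Open Scope ring_scope.
Local Open Scope classical_set_scope.
Set Implicit Arguments.
Unset Strict Implicit.
Unset Printing Implicit Defensive.

Section Expm.
Variable R : realType.
Variable n : nat.
Variable A : 'M[R]_n.

Definition abnd : R := \sum_(l < n) \sum_(j < n) `|A l j|.

Lemma abnd_ge0 : 0 <= abnd.
Proof. by apply: sumr_ge0 => l _; apply: sumr_ge0. Qed.

Lemma col_le_abnd j : \sum_(l < n) `|A l j| <= abnd.
Proof.
apply: ler_sum => l _.
by rewrite (bigD1 j) //= lerDl sumr_ge0.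
Qed.

Lemma pow_bound k i j : `|(A ^+ k) i j| <= abnd ^+ k.
Proof.
elim: k i j => [|k IH] i j.
  rewrite expr0 !mxE; case: (i == j) => /=; by rewrite ?normr1 ?normr0.
rewrite exprSr -mulmxE mxE.
apply: (le_trans (ler_norm_sum _ _ _)).
apply: (@le_trans _ _ (\sum_(l < n) abnd ^+ k * `|A l j|)).
  apply: ler_sum => l _; rewrite normrM ler_wpM2r //.
by rewrite -mulr_sumr exprSr ler_wpM2l ?exprn_ge0 ?abnd_ge0 ?col_le_abnd.
Qed.

Definition cf (p : nat) (i j : 'I_n) (k : nat) : R := (A ^+ (k + p)) i j / (k`!)%:R.

Lemma cf_cvg p i j K : cvgn (pseries (cf p i j) K).
Proof.
apply: normed_cvg.
apply: (@series_le_cvg _ _ (abnd ^+ p *: exp_coeff (abnd * `|K|))).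
- by move=> k /=; rewrite normr_ge0.
- move=> k; rewrite /= mulr_ge0 ?exprn_ge0 ?abnd_ge0 //.
  by rewrite divr_ge0 ?exprn_ge0 ?mulr_ge0 ?abnd_ge0.
- move=> k /=; rewrite /cf normrM normrM normfV normr_nat normrX.
  have -> : (abnd ^+ p *: exp_coeff (abnd * `|K|)) k =
      abnd ^+ (k + p) / k`!%:R * `|K| ^+ k.
    transitivity (abnd ^+ p * ((abnd * `|K|) ^+ k / k`!%:R)); first by [].
    rewrite exprMn exprD; ring.
  rewrite ler_wpM2r ?exprn_ge0 // ler_wpM2r ?invr_ge0 ?ler0n //.
  exact: pow_bound.
- exact: is_cvg_seriesZ (is_cvg_series_exp_coeff _).
Qed.

Lemma cf_diffs p i j : pseries_diffs (cf p i j) = cf p.+1 i j.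
Proof.
apply/funext => k; rewrite /pseries_diffs /cf factS natrM addSnnS.
have h1 : (k.+1%:R : R) != 0 by rewrite pnatr_eq0.
have h2 : (k`!%:R : R) != 0 by rewrite pnatr_eq0 -lt0n fact_gt0.
by field; rewrite h2 addrC natr1 h1.
Qed.

Lemma expm_pseries t i j : expm t A i j = limn (pseries (cf 0 i j) t).
Proof.
rewrite /expm mxE; congr (limn _); apply/funext => N.
rewrite summxE /pseries /series /= big_mkord; apply: eq_bigr => k _.
by rewrite mxE /cf addn0; ring.
Qed.

Definition Dm t : 'M[R]_n := \matrix_(i, j) limn (pseries (cf 1 i j) t).

Lemma expm_derive (t : R) (i j : 'I_n) :
  is_derive t (1 : R) (fun s => expm s A i j) (Dm t i j).
Proof.
rewrite mxE.
have -> : (fun s => expm s A i j) = (fun s => limn (pseries (cf 0 i j) s)).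
  by apply/funext => s; rewrite expm_pseries.
rewrite -cf_diffs.
apply: (@pseries_snd_diffs _ _ (`|t| + 1)).
- exact: cf_cvg.
- rewrite cf_diffs; exact: cf_cvg.
- rewrite !cf_diffs; exact: cf_cvg.
- by rewrite [ltRHS]ger0_norm ?addr_ge0 // ltrDl.
Qed.

Lemma cvg_bigsum (I : Type) (r : seq I) (u : I -> nat -> R) (L : I -> R) :
  (forall l, u l @ \oo --> L l) ->
  (fun N => \sum_(l <- r) u l N) @ \oo --> \sum_(l <- r) L l.
Proof.
move=> H; elim: r => [|x r IH].
  rewrite big_nil; under eq_fun do rewrite big_nil; exact: cvg_cst.
rewrite big_cons; under eq_fun do rewrite big_cons.
exact: cvgD.
Qed.

Lemma Dm_AE t : Dm t = A *m expm t A.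
Proof.
apply/matrixP => i j; rewrite !mxE.
under eq_bigr do rewrite expm_pseries.
apply/cvg_lim => //.
have H := @cvg_bigsum _ (index_enum 'I_n)
  (fun l N => A i l * pseries (cf 0 l j) t N)
  (fun l => A i l * limn (pseries (cf 0 l j) t))
  (fun l => cvgMl_tmp (a := A i l) (@cf_cvg 0 l j t)).
suff -> : pseries (cf 1 i j) t = (fun N => \sum_(l < n) A i l * pseries (cf 0 l j) t N) by exact: H.
apply/funext => N.
rewrite /pseries /series /=.
under [RHS]eq_bigr do rewrite mulr_sumr.
rewrite exchange_big /=; apply: eq_bigr => k _.
rewrite /cf addn1 exprS -mulmxE mxE addn0 mulr_suml mulr_suml.
by apply: eq_bigr => l _; rewrite !mulrA.
Qed.

Lemma Dm_EA t : Dm t = expm t A *m A.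
Proof.
apply/matrixP => i j; rewrite !mxE.
under eq_bigr do rewrite expm_pseries.
apply/cvg_lim => //.
have H := @cvg_bigsum _ (index_enum 'I_n)
  (fun l N => pseries (cf 0 i l) t N * A l j)
  (fun l => limn (pseries (cf 0 i l) t) * A l j)
  (fun l => cvgMr_tmp (b := A l j) (@cf_cvg 0 i l t)).
suff -> : pseries (cf 1 i j) t = (fun N => \sum_(l < n) pseries (cf 0 i l) t N * A l j) by exact: H.
apply/funext => N.
rewrite /pseries /series /=.
under [RHS]eq_bigr do rewrite mulr_suml.
rewrite exchange_big /=; apply: eq_bigr => k _.
rewrite /cf addn1 exprSr -mulmxE mxE addn0 mulr_suml mulr_suml.
by apply: eq_bigr => l _; ring.
Qed.

Lemma expm0 : expm 0 A = 1%:M.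
Proof.
apply/matrixP => i j; rewrite expm_pseries.
apply: lim_near_cst => //; near=> N.
have -> : N = N.-1.+1 by rewrite prednK //; near: N; exists 1%N.
rewrite /pseries /series /= big_nat_recl // big1 ?addr0.
  by rewrite /cf expr0 add0n expr0 fact0 divr1 mulr1.
by move=> k _; rewrite expr0n /= mulr0.
Unshelve. all: by end_near.
Qed.

End Expm.


Section MxDeriv.
Variable R : realType.

Lemma is_derive_mxmul p q r (M : R -> 'M[R]_(p,q)) (N : R -> 'M[R]_(q,r))
  (dM : 'M[R]_(p,q)) (dN : 'M[R]_(q,r)) (t : R) :
  (forall i j, is_derive t (1:R) (fun s => M s i j) (dM i j)) ->
  (forall i j, is_derive t (1:R) (fun s => N s i j) (dN i j)) ->
  forall i j, is_derive t (1:R) (fun s => (M s *m N s) i j)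
                ((dM *m N t + M t *m dN) i j).
Proof.
move=> HM HN i j.
have -> : (fun s => (M s *m N s) i j) = \sum_(l < q) (fun s => M s i l * N s l j).
  by rewrite fct_sumE; apply/funext => s; rewrite mxE.
eapply is_derive_eq.
  exact: (is_derive_sum (fun l => is_deriveM (HM i l) (HN l j))).
rewrite !mxE -big_split /=; apply: eq_bigr => l _.
by rewrite /GRing.scale /= addrC mulrC [in X in _ + X = _]mulrC.
Qed.

Lemma derive_cont (f : R -> R) (t d : R) :
  is_derive t (1:R) f d -> {for t, continuous f}.
Proof. by case=> df _; exact/differentiable_continuous/derivable1_diffP. Qed.

Variable n : nat.
Variable A : 'M[R]_n.

Lemma expm_cont i j : continuous (fun s => expm s A i j).
Proof. by move=> t; exact: derive_cont (expm_derive A t i j). Qed.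

Lemma expmN_derive (t : R) i j :
  is_derive t (1:R) (fun s => expm (- s) A i j) (- Dm A (- t) i j).
Proof.
have := @is_derive1_comp _ (fun s => expm s A i j) -%R t _ _
  (expm_derive A (- t) i j) (is_deriveNid t 1).
by move=> H; apply: is_derive_eq H _; rewrite mulrN1.
Qed.

Lemma expm_inv t : expm t A *m expm (- t) A = 1%:M.
Proof.
apply/matrixP => i j.
have H : forall s, is_derive s (1:R) (fun s => (expm s A *m expm (- s) A) i j) 0.
  move=> s; apply: is_derive_eq.
    apply: (@is_derive_mxmul _ _ _ (fun s => expm s A) (fun s => expm (- s) A)
      (Dm A s) (- Dm A (- s))).
      by move=> k l; exact: expm_derive.
    by move=> k l; rewrite mxE; exact: expmN_derive.
  by rewrite Dm_EA Dm_AE mulmxN mulmxA subrr mxE.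
rewrite (is_derive_0_is_cst t 0 H) oppr0 expm0 mul1mx //.
Qed.

End MxDeriv.


Section CW.
Variable R : realType.
Notation mu := (@lebesgue_measure R).

Definition cw (t : R) (f : R -> R) := {within `[0, t], continuous f}.

Lemma cw_cont t f : continuous f -> cw t f.
Proof. exact: continuous_subspaceT. Qed.

Lemma cwD t f g : cw t f -> cw t g -> cw t (fun s => f s + g s).
Proof. by move=> hf hg x; apply: continuousD; [exact: hf|exact: hg]. Qed.

Lemma cwM t f g : cw t f -> cw t g -> cw t (fun s => f s * g s).
Proof. by move=> hf hg x; apply: continuousM; [exact: hf|exact: hg]. Qed.

Lemma cw_cst t c : cw t (fun _ => c).
Proof. exact/cw_cont/cst_continuous. Qed.

Lemma cwN t f : cw t f -> cw t (fun s => - f s).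
Proof. by move=> hf x; apply: continuousN; exact: hf. Qed.

Lemma cw_sum t (I : Type) (r : seq I) (f : I -> R -> R) :
  (forall l, cw t (f l)) -> cw t (fun s => \sum_(l <- r) f l s).
Proof.
move=> H; elim: r => [|a r IH].
  under eq_fun do rewrite big_nil; exact: cw_cst.
under eq_fun do rewrite big_cons; exact: cwD.
Qed.

Lemma cw_int t f : cw t f -> mu.-integrable `[0, t] (EFin \o f).
Proof. by move=> h; apply: continuous_compact_integrable => //; exact: segment_compact. Qed.

Lemma Rint_sum t (I : Type) (r : seq I) (f : I -> R -> R) :
  (forall l, cw t (f l)) ->
  Rintegral mu `[0, t] (fun s => \sum_(l <- r) f l s) =
  \sum_(l <- r) Rintegral mu `[0, t] (f l).
Proof.
move=> H; elim: r => [|a r IH].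
  have -> : (fun s => \sum_(l <- [::]) f l s) = (fun _ => 0).
    by apply/funext => s; rewrite big_nil.
  by rewrite big_nil Rintegral_cst ?mul0r //; exact: measurable_itv.
have -> : (fun s => \sum_(l <- a :: r) f l s) =
    (fun s => f a s + \sum_(l <- r) f l s).
  by apply/funext => s; rewrite big_cons.
rewrite big_cons RintegralD; [by rewrite IH | exact: measurable_itv | exact: cw_int |].
by apply: cw_int; exact: cw_sum.
Qed.

Lemma RintZl t c f : cw t f ->
  Rintegral mu `[0, t] (fun s => c * f s) = c * Rintegral mu `[0, t] f.
Proof. by move=> h; rewrite RintegralZl //; apply: cw_int. Qed.

Lemma RintZr t c f : cw t f ->
  Rintegral mu `[0, t] (fun s => f s * c) = Rintegral mu `[0, t] f * c.
Proof. by move=> h; rewrite RintegralZr //; apply: cw_int. Qed.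

Definition mcw p q t (M : R -> 'M[R]_(p, q)) := forall i j, cw t (fun s => M s i j).

Lemma mcw_cont p q t (M : R -> 'M[R]_(p, q)) :
  (forall i j, continuous (fun s => M s i j)) -> mcw t M.
Proof. by move=> h i j; exact: cw_cont. Qed.

Lemma mcw_mul p q r t (M : R -> 'M[R]_(p, q)) (N : R -> 'M[R]_(q, r)) :
  mcw t M -> mcw t N -> mcw t (fun s => M s *m N s).
Proof.
move=> hM hN i j.
under eq_fun do rewrite mxE.
by apply: cw_sum => l; apply: cwM.
Qed.

Lemma mcw_add p q t (M N : R -> 'M[R]_(p, q)) :
  mcw t M -> mcw t N -> mcw t (fun s => M s + N s).
Proof. by move=> hM hN i j; under eq_fun do rewrite mxE; apply: cwD. Qed.

Lemma mcw_opp p q t (M : R -> 'M[R]_(p, q)) :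
  mcw t M -> mcw t (fun s => - M s).
Proof. by move=> hM i j; under eq_fun do rewrite mxE; apply: cwN. Qed.

Lemma mcw_tr p q t (M : R -> 'M[R]_(p, q)) :
  mcw t M -> mcw t (fun s => (M s)^T).
Proof.
move=> hM i j; have -> : (fun s => (M s)^T i j) = (fun s => M s j i).
  by apply/funext => s; rewrite mxE.
exact: hM.
Qed.

Lemma mcw_cst p q t (C : 'M[R]_(p, q)) : mcw t (fun _ => C).
Proof. by move=> i j; exact: cw_cst. Qed.

Lemma mcw_scale p q t c (M : R -> 'M[R]_(p, q)) :
  mcw t M -> mcw t (fun s => c *: M s).
Proof. by move=> hM i j; under eq_fun do rewrite mxE; apply: cwM => //; exact: cw_cst. Qed.

Lemma Rint_entry p q r s' t (P : 'M[R]_(p, q)) (M : R -> 'M[R]_(q, r))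
   (Q : 'M[R]_(r, s')) i j :
  mcw t M ->
  Rintegral mu `[0, t] (fun s => (P *m M s *m Q) i j) =
  (P *m mxint t M *m Q) i j.
Proof.
move=> hM.
have hPM : mcw t (fun s => P *m M s) by apply: mcw_mul => //; exact: mcw_cst.
have -> : (fun s => (P *m M s *m Q) i j) =
    (fun s => \sum_(k < r) (P *m M s) i k * Q k j).
  by apply/funext => s; rewrite mxE.
rewrite Rint_sum; last by move=> k; apply: cwM; [exact: hPM|exact: cw_cst].
rewrite mxE; apply: eq_bigr => k _.
rewrite RintZr //; congr (_ * _).
have -> : (fun s => (P *m M s) i k) = (fun s => \sum_(l < q) P i l * M s l k).
  by apply/funext => s; rewrite mxE.
rewrite Rint_sum; last by move=> l; apply: cwM => //; exact: cw_cst.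
rewrite mxE; apply: eq_bigr => l _.
by rewrite RintZl // /mxint mxE.
Qed.

End CW.


Section Sol.
Variable R : realType.
Notation mu := (@lebesgue_measure R).
Variables (n : nat) (A : 'M[R]_n) (b x0 : 'cV[R]_n) (x : R -> 'cV[R]_n).
Hypothesis hx0 : x 0 = x0.
Hypothesis hxd : forall (t : R) (i : 'I_n),
  is_derive t (1:R) (fun s => x s i 0) ((A *m x t + b) i 0).

Lemma x_cont i j : continuous (fun s => x s i j).
Proof. by move=> t; rewrite [j]ord1; exact: derive_cont (hxd t i). Qed.

Lemma expmN_cont i j : continuous (fun s => expm (- s) A i j).
Proof. by move=> t; exact: derive_cont (expmN_derive A t i j). Qed.

Lemma w_derive (t : R) i :
  is_derive t (1:R) (fun s => (expm (- s) A *m x s) i 0) ((expm (- t) A *m b) i 0).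
Proof.
apply: is_derive_eq.
  apply: (@is_derive_mxmul R _ _ _ (fun s => expm (- s) A) x
     (- Dm A (- t)) (A *m x t + b) t).
    by move=> k l; rewrite mxE; exact: expmN_derive.
  by move=> k l; rewrite [l]ord1; exact: hxd.
by rewrite Dm_EA mulmxDr mulNmx mulmxA addrA addNr add0r.
Qed.

Lemma w_cont i : continuous (fun s => (expm (- s) A *m x s) i 0).
Proof. by move=> t; exact: derive_cont (w_derive t i). Qed.

Lemma Zm0 : Zm A 0 = 0.
Proof.
apply/matrixP => i j; rewrite /Zm /mxint !mxE set_itv1.
exact: Rintegral_set1.
Qed.

Lemma x_repr t : 0 <= t -> x t = expm t A *m (x0 + Zm A t *m b).
Proof.
rewrite le_eqVlt => /predU1P[<-|t0].
  by rewrite expm0 mul1mx Zm0 mul0mx addr0 hx0.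
suff key : expm (- t) A *m x t = x0 + Zm A t *m b.
  by rewrite -key mulmxA expm_inv mul1mx.
apply/matrixP => i j; rewrite [j]ord1 [RHS]mxE.
have hf : mcw t (fun s => expm (- s) A *m b).
  apply: mcw_mul; last exact: mcw_cst.
  by apply: mcw_cont => k l; exact: expmN_cont.
pose F := fun s => (expm (- s) A *m x s) i 0.
have hd : derivable_oo_LRcontinuous F 0 t.
  split.
  + by move=> s _; case: (w_derive s i).
  + by apply: cvg_at_right_filter; exact: w_cont.
  + by apply: cvg_at_left_filter; exact: w_cont.
have hd' : {in `]0, t[%R, F^`() =1 (fun s => (expm (- s) A *m b) i 0)}.
  move=> s _; rewrite derive1E; have := w_derive s i; case=> _ ->; done.
move: (@continuous_FTC2 R (fun s => (expm (- s) A *m b) i 0) F 0 t t0 (hf i 0) hd hd').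
move=> /(congr1 fine) /=.
move=> H.
have H2 : Rintegral mu `[0, t] (fun s => (expm (- s) A *m b) i 0) = F t - F 0 by exact: H.
move: H2; rewrite /F oppr0 expm0 mul1mx hx0 => H2.
have H3 : Rintegral mu `[0, t] (fun s => (expm (- s) A *m b) i 0) = (Zm A t *m b) i 0.
  rewrite /Zm -[mxint _ _]mul1mx -(@Rint_entry R n n n 1 t 1%:M (fun s => expm (- s) A) b i 0).
    by apply: eq_Rintegral => s _; rewrite mul1mx.
  by move=> k l; exact/cw_cont/expmN_cont.
by rewrite -H3 H2 addrC subrK.
Qed.
End Sol.


Section Alg.
Variable R : realType.

Lemma sum_tens n m (G : 'I_(n * m) -> R) :
  \sum_(k < n * m) G k = \sum_(a < n) \sum_(b < m) G (mxtens_index (a, b)).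
Proof.
rewrite pair_big /=.
rewrite (reindex (@mxtens_index n m)) /=; last first.
  by exists (@mxtens_unindex n m) => i; rewrite (mxtens_indexK, mxtens_unindexK).
by apply: eq_bigr => -[a b].
Qed.

Lemma vecE m n (F : 'M[R]_(m, n)) a b : vec F (mxtens_index (a, b)) 0 = F b a.
Proof. by rewrite /vec mxE mxtens_indexK. Qed.

Lemma vec_quad_aux n m (xk : 'cV[R]_n) (M : 'M[R]_m) (F : 'M[R]_(m, n)) a b :
  (((xk *m xk^T) *t M) *m vec F) (mxtens_index (a, b)) 0 =
  xk a 0 * (M *m (F *m xk)) b 0.
Proof.
rewrite mxE sum_tens exchange_big /= mxE mulr_sumr; apply: eq_bigr => d _.
rewrite mxE mulr_sumr mulr_sumr; apply: eq_bigr => c _.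
rewrite tensmxE vecE mxE big_ord1 mxE; ring.
Qed.

Lemma vec_quad n m (xk : 'cV[R]_n) (M : 'M[R]_m) (F : 'M[R]_(m, n)) :
  ((vec F)^T *m ((xk *m xk^T) *t M) *m vec F) 0 0 = quad M (F *m xk).
Proof.
rewrite /quad -!mulmxA mxE sum_tens [RHS]mxE.
rewrite exchange_big /=; apply: eq_bigr => b _.
rewrite [(F *m xk)^T 0 b]mxE [(F *m xk) b 0]mxE mulr_suml; apply: eq_bigr => a _.
by rewrite mxE vecE vec_quad_aux; ring.
Qed.

Lemma vec_dot n m (xk : 'cV[R]_n) (N : 'M[R]_(m, n)) (F : 'M[R]_(m, n)) :
  ((vec (N *m xk *m xk^T))^T *m vec F) 0 0 = ((N *m xk)^T *m (F *m xk)) 0 0.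
Proof.
rewrite mxE sum_tens [RHS]mxE exchange_big /=; apply: eq_bigr => b _.
rewrite [(F *m xk) b 0]mxE mulr_sumr; apply: eq_bigr => a _.
by rewrite mxE vecE vecE mxE big_ord1 !mxE; ring.
Qed.


Lemma tr11 (X : 'M[R]_1) : X 0 0 = X^T 0 0.
Proof. by rewrite mxE. Qed.

Lemma e00D (X Y : 'M[R]_1) : (X + Y) 0 0 = X 0 0 + Y 0 0.
Proof. by rewrite mxE. Qed.

Lemma e00B (X Y : 'M[R]_1) : (X - Y) 0 0 = X 0 0 - Y 0 0.
Proof. by rewrite !mxE. Qed.

Lemma e00Z c (X : 'M[R]_1) : (c *: X) 0 0 = c * X 0 0.
Proof. by rewrite mxE. Qed.

Lemma quad_cross n (P : 'M[R]_n) (v w : 'cV[R]_n) : P^T = P ->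
  quad P (v + w) = quad P v + 2 * (v^T *m P *m w) 0 0 + quad P w.
Proof.
move=> hP; rewrite /quad [(v + w)^T]raddfD /= !mulmxDl !mulmxDr !e00D.
rewrite [(w^T *m P *m v) 0 0]tr11 !trmx_mul trmxK hP mulmxA; ring.
Qed.

Lemma quadDl n (M N : 'M[R]_n) z : quad (M + N) z = quad M z + quad N z.
Proof. by rewrite /quad mulmxDr mulmxDl e00D. Qed.

Lemma quadBl n (M N : 'M[R]_n) z : quad (M - N) z = quad M z - quad N z.
Proof. by rewrite /quad mulmxBr mulmxBl e00B. Qed.

Lemma quadZl n c (M : 'M[R]_n) z : quad (c *: M) z = c * quad M z.
Proof. by rewrite /quad -scalemxAr -scalemxAl e00Z. Qed.

Lemma final_alg n m (B : 'M[R]_(n, m)) (Ex Zx H0 P : 'M[R]_n)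
   (H1 : 'M[R]_(n, m)) (H2 : 'M[R]_m) (xk : 'cV[R]_n) (F : 'M[R]_(m, n)) (alpha : R) :
  P^T = P ->
  quad H0 xk + 2 * (xk^T *m H1 *m (F *m xk)) 0 0 + quad H2 (F *m xk)
   - alpha * (quad P xk - quad P (Ex *m (xk + Zx *m (B *m (F *m xk))))) =
  2^-1 * ((vec F)^T *m (2 *: ((xk *m xk^T) *t (H2 + alpha *: (B^T *m Zx^T *m Ex^T *m P *m Ex *m Zx *m B)))) *m vec F) 0 0
   + ((2 *: vec ((H1^T + alpha *: (B^T *m Zx^T *m Ex^T *m P *m Ex)) *m xk *m xk^T))^T *m vec F) 0 0
   + quad (H0 + alpha *: (Ex^T *m P *m Ex - P)) xk.
Proof.
move=> hP.
set u := F *m xk.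
rewrite -scalemxAr -scalemxAl e00Z vec_quad -/u mulrA mulVf ?mul1r; last first.
  by rewrite pnatr_eq0.
rewrite [(2 *: _)^T]linearZ /= -scalemxAl e00Z vec_dot -/u.
rewrite quadDl quadZl quadDl quadZl quadBl.
rewrite mulmxDr !mulmxA quad_cross; last first.
  exact: hP.
rewrite /quad /u !trmx_mul ?trmxK [(_ + _)^T]raddfD /= [(alpha *: _)^T]linearZ /=.
rewrite !trmx_mul ?trmxK hP.
rewrite ?mulmxDl ?mulmxDr -?scalemxAl -?scalemxAr ?mulmxA ?e00D ?e00Z.
rewrite [(_ + _) *m F]mulmxDl [(_ + _) *m xk]mulmxDl -[(alpha *: _) *m F]scalemxAl.
rewrite -[(alpha *: _) *m xk]scalemxAl e00D e00Z ?mulmxA; ring.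
Qed.


Lemma in_csetE (T : finType) (P : pred T) y : (y \in in_set [set x | P x]) = P y.
Proof. by rewrite unfold_in /= asboolb. Qed.

Lemma card_bij_set (T1 T2 : finType) (h : T1 -> T2) (g : T2 -> T1)
   (P1 : pred T1) (P2 : pred T2) :
  cancel h g -> cancel g h -> (forall x, P2 (h x) = P1 x) ->
  #|[set x | P1 x]| = #|[set y | P2 y]|.
Proof.
move=> hK gK hP; rewrite -(card_imset _ (can_inj hK)); apply: eq_card => y.
rewrite in_csetE; apply/imsetP/idP => [[x]|Py].
  by rewrite in_csetE -hP => Px ->.
by exists (g y); rewrite ?in_csetE -?hP ?gK.
Qed.

Lemma nnz_vec m n (F : 'M[R]_(m, n)) : nnz (vec F) = nnz F.
Proof.
rewrite /nnz; symmetry.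
apply: (@card_bij_set _ _ (fun p => (mxtens_index (p.2, p.1), ord0))
  (fun q => ((mxtens_unindex q.1).2, (mxtens_unindex q.1).1))).
- by move=> [a b]; rewrite mxtens_indexK.
- move=> [k j]; rewrite [j]ord1; congr (_, _).
  by case: (mxtens_indexP k) => a b; rewrite mxtens_indexK.
- by move=> [a b]; rewrite vecE.
Qed.

Lemma kron_entry n m (xk : 'cV[R]_n) (F : 'M[R]_(m, n)) b :
  ((xk^T *t (1%:M : 'M[R]_m)) *m vec F) (mxtens_index (ord0, b)) 0 = (F *m xk) b 0.
Proof.
rewrite mxE sum_tens [RHS]mxE; apply: eq_bigr => c _.
have -> : \sum_(d < m) (xk^T *t 1%:M) (mxtens_index (ord0, b)) (mxtens_index (c, d)) *
     vec F (mxtens_index (c, d)) 0 = xk c 0 * (1%:M *m F) b c.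
  rewrite [(1%:M *m F) b c]mxE mulr_sumr; apply: eq_bigr => d _.
  by rewrite tensmxE vecE mxE; ring.
by rewrite mul1mx mulrC.
Qed.

Lemma nnz_kron n m (xk : 'cV[R]_n) (F : 'M[R]_(m, n)) :
  nnz ((xk^T *t (1%:M : 'M[R]_m)) *m vec F) = nnz (F *m xk).
Proof.
rewrite /nnz; symmetry.
apply: (@card_bij_set _ _ (fun p => (mxtens_index (ord0, p.1), p.2))
  (fun q => ((mxtens_unindex q.1).2, q.2))).
- by move=> [a b]; rewrite mxtens_indexK.
- move=> [k j]; congr (_, _).
  case: (mxtens_indexP k) => a b; rewrite mxtens_indexK.
  by rewrite [a]ord1.
- by move=> [a j]; rewrite [j]ord1; exact: (congr1 (fun r => r != 0) (kron_entry xk F a)).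
Qed.

Lemma vec_bij m n : bijective (@vec R m n).
Proof.
exists (fun f : 'cV[R]_(n * m) => \matrix_(i < m, j < n) f (mxtens_index (j, i)) 0).
  by move=> F; apply/matrixP => i j; rewrite mxE vecE.
move=> f; apply/matrixP => k l; rewrite [l]ord1.
case: (mxtens_indexP k) => a b.
by rewrite vecE mxE.
Qed.

End Alg.


Section JEq.
Variable R : realType.
Notation mu := (@lebesgue_measure R).
Variables (n m : nat) (A : 'M[R]_n) (B : 'M[R]_(n, m)) (Q : 'M[R]_n) (Rc : 'M[R]_m)
  (xk : 'cV[R]_n) (F : 'M[R]_(m, n)) (x : R -> 'cV[R]_n).
Hypothesis hQ : Q^T = Q.
Hypothesis hx0 : x 0 = xk.
Hypothesis hxd : forall (t : R) (i : 'I_n),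
  is_derive t (1:R) (fun s => x s i 0) ((A *m x t + B *m (F *m xk)) i 0).

Lemma mu_itv (xi : R) : 0 <= xi -> fine (mu `[0, xi]) = xi.
Proof.
move=> h0; rewrite lebesgue_measure_itv /= lte_fin.
rewrite le_eqVlt in h0; case/predU1P: h0 => [<-|->] /=.
  by rewrite ltxx.
by rewrite subr0.
Qed.

Lemma Zm_cw (xi : R) : 0 <= xi -> mcw xi (fun t => Zm A t).
Proof.
move=> h0 i j.
have -> : (fun t => Zm A t i j) =
    (fun t => parameterized_integral mu 0 t (fun s => expm (- s) A i j)).
  by apply/funext => t; rewrite /Zm /mxint mxE.
apply: parameterized_integral_continuous => //.
by apply: cw_int; apply: cw_cont; exact: expmN_cont.
Qed.

Lemma E_cw (xi : R) : mcw xi (fun t => expm t A).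
Proof. by apply: mcw_cont => i j; exact: expm_cont. Qed.

Lemma J_eq (xi : R) : 0 <= xi ->
  Rintegral mu `[0, xi] (fun t => quad Q (x t) + quad Rc (F *m xk)) =
  quad (H0 A Q xi) xk + 2 * (xk^T *m H1 A B Q xi *m (F *m xk)) 0 0
  + quad (H2 A B Q Rc xi) (F *m xk).
Proof.
move=> h0.
set u := F *m xk.
pose M0 := fun tau => (expm tau A)^T *m Q *m expm tau A.
pose M1 := fun tau => (expm tau A)^T *m Q *m expm tau A *m Zm A tau *m B.
pose M2 := fun tau => (expm tau A *m Zm A tau *m B)^T *m Q
                        *m (expm tau A *m Zm A tau *m B).
have hint : {in `[0, xi], (fun t => quad Q (x t) + quad Rc u) =1
   (fun t => (xk^T *m M0 t *m xk) 0 0 + 2 * (xk^T *m M1 t *m u) 0 0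
             + (u^T *m M2 t *m u) 0 0 + quad Rc u)}.
  move=> t /set_mem; rewrite /= in_itv /= => /andP[t0 _].
  rewrite (x_repr hx0 hxd t0) mulmxDr.
  have -> : expm t A *m (Zm A t *m (B *m (F *m xk))) =
      (expm t A *m Zm A t *m B) *m u by rewrite /u !mulmxA.
  rewrite quad_cross // /quad /M0 /M1 /M2 !trmx_mul !mulmxA.
  done.
have cE := @E_cw xi; have cZ := Zm_cw h0.
have cM0 : mcw xi M0.
  by apply: mcw_mul; [apply: mcw_mul; [exact: mcw_tr|exact: mcw_cst]|].
have cM1 : mcw xi M1.
  apply: mcw_mul; last exact: mcw_cst.
  by apply: mcw_mul => //.
have cY : mcw xi (fun tau => expm tau A *m Zm A tau *m B).
  by apply: mcw_mul; [apply: mcw_mul|exact: mcw_cst].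
have cM2 : mcw xi M2.
  by apply: mcw_mul => //; apply: mcw_mul; [exact: mcw_tr|exact: mcw_cst].
have ent : forall p q (P : 'M[R]_(1, p)) (M : R -> 'M[R]_(p, q)) (Q' : 'M[R]_(q, 1)),
    mcw xi M -> cw xi (fun t => (P *m M t *m Q') 0 0).
  move=> p q P M Q' hM; apply: (@mcw_mul _ _ _ _ xi (fun t => P *m M t) (fun _ => Q')).
    by apply: mcw_mul => //; exact: mcw_cst.
  exact: mcw_cst.
have c0 := ent _ _ xk^T M0 xk cM0.
have c1 := ent _ _ xk^T M1 u cM1.
have c2 := ent _ _ u^T M2 u cM2.
have -> : Rintegral mu `[0, xi] (fun t => quad Q (x t) + quad Rc u) =
   Rintegral mu `[0, xi] (fun t => (xk^T *m M0 t *m xk) 0 0 + 2 * (xk^T *m M1 t *m u) 0 0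
             + (u^T *m M2 t *m u) 0 0 + quad Rc u).
  by apply: eq_Rintegral => t ht; rewrite hint.
have mI : measurable (`[0, xi] : set R) by exact: measurable_itv.
rewrite RintegralD //; last 2 first.
  apply: cw_int; apply: cwD; [apply: cwD => //|exact: c2].
  by apply: cwM => //; exact: cw_cst.
  by apply: cw_int; exact: cw_cst.
rewrite RintegralD //; last 2 first.
  by apply: cw_int; apply: cwD => //; apply: cwM => //; exact: cw_cst.
  exact: cw_int.
rewrite RintegralD //; last 2 first.
  exact: cw_int.
  by apply: cw_int; apply: cwM => //; exact: cw_cst.
rewrite RintZl // Rintegral_cst // mu_itv //.
rewrite !Rint_entry //.
rewrite /H2 quadDl quadZl /quad -/M2 /H0 -/M0 /H1 -/M1.
ring.
Qed.
End JEq.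


Unset Implicit Arguments.
Set Strict Implicit.
Set Printing Implicit Defensive.

Theorem theorem3 (R : realType) (n m : nat)
  (A : 'M[R]_n) (B : 'M[R]_(n, m)) (Q : 'M[R]_n) (Rc : 'M[R]_m)
  (alpha gamma eta : R) (xk : 'cV[R]_n)
  (Ft : 'M[R]_(m, n)) (Pt : 'M[R]_n)
  (x : 'M[R]_(m, n) -> R -> 'cV[R]_n) :
  stabilizable A B -> posdef Q -> posdef Rc ->
  1 < alpha -> 0 <= gamma -> 0 <= eta ->
  hurwitz (A + B *m Ft) -> posdef Pt ->
  (A + B *m Ft)^T *m Pt + Pt *m (A + B *m Ft) + Q + Ft^T *m Rc *m Ft = 0 ->
  (* x F s = state at time t_k + s under the constant input u = F x_k *)
  (forall F : 'M[R]_(m, n), x F 0 = xk /\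
     forall (t : R) (i : 'I_n),
       is_derive t 1 (fun s => x F s i 0) ((A *m x F t + B *m (F *m xk)) i 0)) ->
  let V := fun z : 'cV[R]_n => quad Pt z in
  let J := fun (F : 'M[R]_(m, n)) (xi : R) =>
    Rintegral (@lebesgue_measure R) `[0, xi]
      (fun t => quad Q (x F t) + quad Rc (F *m xk)) in
  let E := fun xi : R => expm xi A in
  let P1 := fun xi : R =>
    2 *: ((xk *m xk^T) *t (H2 A B Q Rc xi
       + alpha *: (B^T *m (Zm A xi)^T *m (E xi)^T *m Pt *m E xi *m Zm A xi *m B))) in
  let q1 := fun xi : R =>
    2 *: vec (((H1 A B Q xi)^T
       + alpha *: (B^T *m (Zm A xi)^T *m (E xi)^T *m Pt *m E xi)) *m xk *m xk^T) in
  let r1 := fun xi : R =>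
    quad (H0 A Q xi + alpha *: ((E xi)^T *m Pt *m E xi - Pt)) xk in
  let feas1 := fun (F : 'M[R]_(m, n)) (delta : R) =>
    forall xi : R, 0 <= xi <= delta -> J F xi <= alpha * (V xk - V (x F xi)) in
  let feas2 := fun (f : 'cV[R]_(n * m)) (delta : R) =>
    forall xi : R, 0 <= xi < delta ->
      2^-1 * (f^T *m P1 xi *m f) 0 0 + ((q1 xi)^T *m f) 0 0 + r1 xi <= 0 in
  let obj1 := fun (F : 'M[R]_(m, n)) (delta : R) =>
    - delta + gamma * (nnz F)%:R + eta * (nnz (F *m xk))%:R in
  let obj2 := fun (f : 'cV[R]_(n * m)) (delta : R) =>
    - delta + gamma * (nnz f)%:R
      + eta * (nnz ((xk^T *t (1%:M : 'M[R]_m)) *m f))%:R in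
  bijective (@vec R m n) /\
  forall (F : 'M[R]_(m, n)) (delta : R),
    (feas1 F delta <-> feas2 (vec F) delta) /\
    obj1 F delta = obj2 (vec F) delta.
Proof.
move=> _ [hQs _] _ _ _ _ _ [hPs _] _ hx V J E P1 q1 r1 feas1 feas2 obj1 obj2.
split; first exact: vec_bij.
move=> F delta.
have [hx0 hxd] := hx F.
have key : forall xi, 0 <= xi ->
    J F xi - alpha * (V xk - V (x F xi)) =
    2^-1 * ((vec F)^T *m P1 xi *m vec F) 0 0 + ((q1 xi)^T *m vec F) 0 0 + r1 xi.
  move=> xi h0.
  rewrite /J (@J_eq R n m A B Q Rc xk F (x F) hQs hx0 hxd xi h0) /V (x_repr hx0 hxd h0).
  exact: final_alg.
split; last by rewrite /obj1 /obj2 nnz_vec nnz_kron.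
split.
  move=> h xi /andP[h0 hlt]; rewrite -(key xi h0) subr_le0.
  by apply: h; rewrite h0 ltW.
move=> h xi /andP[h0 hle]; rewrite -subr_le0 key //.
case: (ltP xi delta) => [hlt|hge]; first by apply: h; rewrite h0.
have xid : xi = delta by apply/eqP; rewrite eq_le hle hge.
subst xi; rewrite -key //.
move: h0; rewrite le_eqVlt => /predU1P[d0|dpos].
  subst delta; rewrite /J set_itv1 Rintegral_set1 hx0 subrr mulr0 subrr.
  exact: lexx.
pose g := fun xi => J F xi - alpha * (V xk - V (x F xi)).
have cx : mcw delta (x F).
  by apply: mcw_cont => i j; exact: (x_cont hxd).
have cq : forall p (M : 'M[R]_p) (y : R -> 'cV[R]_p), mcw delta y ->
    cw delta (fun t => quad M (y t)).
  move=> p M y hy; rewrite /quad.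
  apply: (@mcw_mul _ _ _ _ delta (fun t => (y t)^T *m M) y) => //.
  by apply: mcw_mul; [exact: mcw_tr|exact: mcw_cst].
have cphi : cw delta (fun t => quad Q (x F t) + quad Rc (F *m xk)).
  by apply: cwD; [exact: cq|exact: cw_cst].
have cJ : cw delta (fun xi => J F xi).
  exact: parameterized_integral_continuous (ltW dpos) (cw_int cphi).
have cg : {within `[0, delta], continuous g}.
  apply: cwD => //; apply: cwN; apply: cwM; first exact: cw_cst.
  by apply: cwD; [exact: cw_cst|apply: cwN; exact: cq].
have [_ _ hleft] := (continuous_within_itvP g dpos).1 cg.
apply: (cvgr_to_le hleft).
near=> y.
have y0 : 0 <= y by near: y; exact: nbhs_left_ge.
have yd : y < delta by near: y; exact: nbhs_left_lt.
rewrite /g key //; apply: h; by rewrite y0 yd.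
Unshelve. all: by end_near.
Qed.
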